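(* Let $T(x)=\int_{\mathbb R}e^{-\sqrt2|x-y|}\mathrm{sech}^2(y)\,dy$, and for integers $k\ge1$ let $p_k=\int_{\mathbb R}\mathrm{sech}^k(x)\cos(x)\,dx$, $r_k=\int_{\mathbb R}\mathrm{sech}^k(x)T(x)\cos(x)\,dx$, $s_k=\int_{\mathbb R}\mathrm{sech}^k(x)T(x)\tanh(x)\sin(x)\,dx$. Then \begin{align*} r_3&=-r_1+s_1+\sqrt2\,p_1,\\ s_3&=\tfrac13s_1-r_1+\tfrac79\sqrt2\,p_1,\\ r_5&=-r_1+\tfrac23s_1+\tfrac{37}{36}\sqrt2\,p_1,\\ s_5&=-\tfrac25r_1+\tfrac1{15}s_1+\tfrac{13}{36}\sqrt2\,p_1,\\ r_7&=-\tfrac{13}{15}r_1+\tfrac{23}{45}s_1+\tfrac{83\sqrt2}{90}p_1 . \end{align*} *)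

(* Defs.v *)
From Stdlib Require Import Reals.
From Coquelicot Require Import Coquelicot.
Open Scope R_scope.

Definition sech (x : R) : R := / cosh x.

Definition int_R (f : R -> R) : R :=
  RInt_gen f (Rbar_locally m_infty) (Rbar_locally p_infty).

Definition T (x : R) : R :=
  int_R (fun y => exp (- sqrt 2 * Rabs (x - y)) * (sech y) ^ 2).

Definition p_ (k : nat) : R := int_R (fun x => (sech x) ^ k * cos x).
Definition r_ (k : nat) : R := int_R (fun x => (sech x) ^ k * T x * cos x).
Definition s_ (k : nat) : R := int_R (fun x => (sech x) ^ k * T x * tanh x * sin x).

(* Main.v *)
Require Import Defs.
From Stdlib Require Import Reals Lra Psatz.
From Coquelicot Require Import Coquelicot.
Open Scope R_scope.

Lemma cosh_pos x : 0 < cosh x.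
Proof. unfold cosh. pose proof (exp_pos x). pose proof (exp_pos (-x)). lra. Qed.

Lemma cosh_ge1 x : 1 <= cosh x.
Proof.
  unfold cosh. rewrite exp_Ropp. pose proof (exp_pos x) as H.
  set (E := exp x) in *.
  assert (E + / E - 2 = (E - 1)^2 * / E) by (field; lra).
  assert (0 <= (E-1)^2 * / E) by (apply Rmult_le_pos; [apply pow2_ge_0 | apply Rlt_le, Rinv_0_lt_compat; lra]).
  lra.
Qed.

Lemma sech_pos x : 0 < sech x.
Proof. unfold sech. apply Rinv_0_lt_compat, cosh_pos. Qed.

Lemma sech_le1 x : sech x <= 1.
Proof.
  unfold sech. pose proof (cosh_ge1 x). rewrite <- Rinv_1. apply Rinv_le_contravar; lra.
Qed.

Lemma sech_exp x : sech x <= 2 * exp (- Rabs x).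
Proof.
  unfold sech, cosh. pose proof (exp_pos x). pose proof (exp_pos (-x)).
  assert (exp (Rabs x) <= exp x + exp (-x)).
  { destruct (Rle_dec 0 x). rewrite Rabs_right by lra. lra.
    rewrite Rabs_left by lra. lra. }
  rewrite (exp_Ropp (Rabs x)). pose proof (exp_pos (Rabs x)).
  replace (/ ((exp x + exp (- x)) / 2)) with (2 * / (exp x + exp (-x))) by (field; lra).
  apply Rmult_le_compat_l. lra. apply Rinv_le_contravar; lra.
Qed.

Lemma tanh_sq x : tanh x ^ 2 = 1 - sech x ^ 2.
Proof.
  unfold tanh, sech, sinh, cosh. rewrite exp_Ropp. pose proof (exp_pos x).
  set (E := exp x) in *.
  assert (0 < E*E+1) by nra.
  field. split; lra.
Qed.

Lemma tanh_abs x : Rabs (tanh x) <= 1.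
Proof.
  pose proof (tanh_sq x). pose proof (sech_pos x).
  simpl in H. apply Rabs_le; split; nra.
Qed.

Lemma is_derive_sech x : is_derive sech x (- sech x * tanh x).
Proof.
  unfold sech, tanh. pose proof (cosh_pos x).
  pose proof (proj2 (is_derive_Reals _ _ _) (derivable_pt_lim_cosh x)) as H0.
  replace (- / cosh x * (sinh x / cosh x)) with (- (sinh x) / (cosh x)^2) by (field; lra).
  apply (is_derive_inv cosh x (sinh x)). exact H0. lra.
Qed.
Lemma fp_all (Fa Fb : (R -> Prop) -> Prop) {FFa : Filter Fa} {FFb : Filter Fb}
  (P : R * R -> Prop) : (forall a b, P (a, b)) -> filter_prod Fa Fb P.
Proof.
  intros H. exists (fun _ => True) (fun _ => True); try apply filter_true.
  intros; apply H.
Qed.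

Ltac fpall := apply fp_all; [ typeclasses eauto | typeclasses eauto | ].

Lemma filterlim_at_point_self (H : R -> R) x :
  filterlim H (at_point x) (locally (H x)).
Proof.
  intros P HP. unfold filtermap, at_point. now apply locally_singleton.
Qed.

Lemma lim0_p g C : (forall y, 0 <= y -> Rabs (g y) <= C * exp (- y)) ->
  filterlim g (Rbar_locally p_infty) (locally 0).
Proof.
  intros Hg. apply filterlim_locally. intros eps.
  set (C' := Rabs C + 1). assert (HC : 0 < C') by (unfold C'; pose proof (Rabs_pos C); lra).
  pose proof (cond_pos eps) as He.
  exists (Rmax 0 (ln (C' / eps))). intros y Hy.
  pose proof (Rmax_l 0 (ln (C'/eps))). pose proof (Rmax_r 0 (ln (C'/eps))).
  change (Rabs (g y - 0) < eps). rewrite Rminus_0_r.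
  assert (exp (- y) < eps / C').
  { replace (eps / C') with (exp (- ln (C' / eps))).
    apply exp_increasing. lra.
    rewrite exp_Ropp, exp_ln. field; lra. apply Rdiv_lt_0_compat; lra. }
  pose proof (Hg y ltac:(lra)). pose proof (exp_pos (-y)).
  assert (C * exp (-y) <= C' * exp(-y)).
  { apply Rmult_le_compat_r. lra. unfold C'. pose proof (Rle_abs C). lra. }
  assert (C' * exp (-y) < eps).
  { replace (pos eps) with (C' * (eps / C')) by (field; lra). apply Rmult_lt_compat_l; lra. }
  lra.
Qed.

Lemma lim0_m g C : (forall y, y <= 0 -> Rabs (g y) <= C * exp y) ->
  filterlim g (Rbar_locally m_infty) (locally 0).
Proof.
  intros Hg. apply filterlim_locally. intros eps.
  set (C' := Rabs C + 1). assert (HC : 0 < C') by (unfold C'; pose proof (Rabs_pos C); lra).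
  pose proof (cond_pos eps) as He.
  exists (Rmin 0 (- ln (C' / eps))). intros y Hy.
  pose proof (Rmin_l 0 (- ln (C'/eps))). pose proof (Rmin_r 0 (- ln (C'/eps))).
  change (Rabs (g y - 0) < eps). rewrite Rminus_0_r.
  assert (exp y < eps / C').
  { replace (eps / C') with (exp (- ln (C' / eps))).
    apply exp_increasing. lra.
    rewrite exp_Ropp, exp_ln. field; lra. apply Rdiv_lt_0_compat; lra. }
  pose proof (Hg y ltac:(lra)). pose proof (exp_pos y).
  assert (C * exp y <= C' * exp y).
  { apply Rmult_le_compat_r. lra. unfold C'. pose proof (Rle_abs C). lra. }
  assert (C' * exp y < eps).
  { replace (pos eps) with (C' * (eps / C')) by (field; lra). apply Rmult_lt_compat_l; lra. }
  lra.
Qed.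

Lemma exR (f : R -> R) u v : (forall x, continuous f x) -> ex_RInt f u v.
Proof. intros Hf. apply (ex_RInt_continuous (V:=R_CompleteNormedModule)). intros; apply Hf. Qed.

Lemma RInt_bound (f dG G : R -> R) u v :
  (forall x, continuous f x) -> (forall x, is_derive G x (dG x)) ->
  (forall x, continuous dG x) -> (forall x, Rabs (f x) <= dG x) ->
  u <= v -> Rabs (RInt f u v) <= G v - G u.
Proof.
  intros Hf HG HdG Hb Huv.
  assert (exf : ex_RInt f u v) by (apply exR; auto).
  assert (exg : ex_RInt dG u v) by (apply exR; auto).
  eapply Rle_trans. apply abs_RInt_le; auto.
  assert (E : RInt dG u v = G v - G u).
  { apply is_RInt_unique. apply (is_RInt_derive G dG); auto. }
  rewrite <- E. apply RInt_le; auto.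
  all: try (apply exR; intros; apply continuous_Rabs_comp; auto).
  all: try (intros; apply Hb).
Qed.

Lemma RInt_diff (f : R -> R) u v : (forall x, continuous f x) ->
  RInt f 0 v - RInt f 0 u = RInt f u v.
Proof.
  intros Hf. rewrite <- (RInt_Chasles f 0 u v).
  change (plus ?a ?b) with (a + b). ring.
  apply exR; auto. apply exR; auto.
Qed.

Lemma RInt_abs_swap (f : R -> R) u v : (forall x, continuous f x) ->
  Rabs (RInt f u v) = Rabs (RInt f v u).
Proof.
  intros Hf. rewrite <- (opp_RInt_swap f u v). change (opp ?a) with (- a). symmetry; apply Rabs_Ropp.
  apply exR; auto.
Qed.

Lemma is_derive_RInt0 (f : R -> R) x : (forall x, continuous f x) ->
  is_derive (fun y => RInt f 0 y) x (f x).
Proof.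
  intros Hf. apply (is_derive_RInt (V:=R_NormedModule) f (fun y => RInt f 0 y) 0 x); auto. apply filter_forall. intros b.
  apply (RInt_correct (V:=R_CompleteNormedModule)). apply exR; auto.
Qed.

Lemma tail_p (f dG G : R -> R) (Gp : R) :
  (forall x, continuous f x) -> (forall x, is_derive G x (dG x)) ->
  (forall x, continuous dG x) -> (forall x, Rabs (f x) <= dG x) ->
  filterlim G (Rbar_locally p_infty) (locally Gp) ->
  exists L, forall x, is_RInt_gen f (at_point x) (Rbar_locally p_infty) (L - RInt f 0 x)
     /\ Rabs (L - RInt f 0 x) <= Gp - G x.
Proof.
  intros Hf HG HdG Hb HGl.
  set (H := fun x => RInt f 0 x).
  assert (HL : exists L, filterlim H (Rbar_locally p_infty) (locally L)).
  { apply filterlim_locally_cauchy. intros eps.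
    pose proof (proj1 (filterlim_locally _ _) HGl (pos_div_2 eps)) as [M HM].
    exists (fun x => M < x). split. exists M; auto.
    intros u v Hu Hv. pose proof (HM _ Hu) as HM0.
    change (Rabs (H v - H u) < eps). unfold H. rewrite RInt_diff by auto.
    pose proof (HM _ Hv) as HMv. change (Rabs (G u - Gp) < eps/2) in HM0.
    change (Rabs (G v - Gp) < eps/2) in HMv.
    destruct (Rle_dec u v).
    - pose proof (RInt_bound f dG G u v Hf HG HdG Hb r).
      apply Rabs_lt_between' in HM0. apply Rabs_lt_between' in HMv. lra.
    - rewrite RInt_abs_swap by auto.
      pose proof (RInt_bound f dG G v u Hf HG HdG Hb ltac:(lra)).
      apply Rabs_lt_between' in HM0. apply Rabs_lt_between' in HMv. lra. }
  destruct HL as [L HL]. exists L. intros x.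
  assert (DH : forall y, is_derive H y (f y)) by (intros; apply is_derive_RInt0; auto).
  split.
  - assert (is_RInt_gen (Derive H) (at_point x) (Rbar_locally p_infty) (L - H x)).
    { apply is_RInt_gen_Derive.
      fpall. intros a b y _; exists (f y); apply DH.
      fpall. intros a b y _. eapply continuous_ext. intros; symmetry; apply is_derive_unique, DH. auto.
      apply filterlim_at_point_self. auto. }
    eapply is_RInt_gen_ext; [| exact H0].
    fpall. intros; simpl. apply is_derive_unique, DH.
  - assert (HI : is_RInt_gen dG (at_point x) (Rbar_locally p_infty) (Gp - G x)).
    { eapply is_RInt_gen_ext; [| apply (is_RInt_gen_Derive G)].
      fpall. intros; simpl. apply is_derive_unique, HG.
      fpall. intros a b y _; exists (dG y); apply HG.
      fpall. intros a b y _. eapply continuous_ext. intros; symmetry; apply is_derive_unique, HG. auto.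
      apply filterlim_at_point_self. auto. }
    assert (Hf' : is_RInt_gen f (at_point x) (Rbar_locally p_infty) (L - H x)).
    { assert (is_RInt_gen (Derive H) (at_point x) (Rbar_locally p_infty) (L - H x)).
      { apply is_RInt_gen_Derive.
        fpall. intros a b y _; exists (f y); apply DH.
        fpall. intros a b y _. eapply continuous_ext. intros; symmetry; apply is_derive_unique, DH. auto.
        apply filterlim_at_point_self. auto. }
      eapply is_RInt_gen_ext; [| exact H0].
      fpall. intros; simpl. apply is_derive_unique, DH. }
    apply (RInt_gen_norm (Fa := at_point x) (Fb := Rbar_locally p_infty) f dG); [ | | exact Hf' | exact HI].
    + exists (fun a => a = x) (fun b => x < b). reflexivity. exists x; auto.
      intros a b ha hb; simpl; subst; lra.
    + fpall. intros a b y _. apply Hb.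
Qed.

Lemma tail_m (f dG G : R -> R) (Gm : R) :
  (forall x, continuous f x) -> (forall x, is_derive G x (dG x)) ->
  (forall x, continuous dG x) -> (forall x, Rabs (f x) <= dG x) ->
  filterlim G (Rbar_locally m_infty) (locally Gm) ->
  exists L, forall x, is_RInt_gen f (Rbar_locally m_infty) (at_point x) (RInt f 0 x - L)
     /\ Rabs (RInt f 0 x - L) <= G x - Gm.
Proof.
  intros Hf HG HdG Hb HGl.
  set (H := fun x => RInt f 0 x).
  assert (HL : exists L, filterlim H (Rbar_locally m_infty) (locally L)).
  { apply filterlim_locally_cauchy. intros eps.
    pose proof (proj1 (filterlim_locally _ _) HGl (pos_div_2 eps)) as [M HM].
    exists (fun x => x < M). split. exists M; auto.
    intros u v Hu Hv. pose proof (HM _ Hu) as HM0.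
    change (Rabs (H v - H u) < eps). unfold H. rewrite RInt_diff by auto.
    pose proof (HM _ Hv) as HMv. change (Rabs (G u - Gm) < eps/2) in HM0.
    change (Rabs (G v - Gm) < eps/2) in HMv.
    destruct (Rle_dec u v).
    - pose proof (RInt_bound f dG G u v Hf HG HdG Hb r).
      apply Rabs_lt_between' in HM0. apply Rabs_lt_between' in HMv. lra.
    - rewrite RInt_abs_swap by auto.
      pose proof (RInt_bound f dG G v u Hf HG HdG Hb ltac:(lra)).
      apply Rabs_lt_between' in HM0. apply Rabs_lt_between' in HMv. lra. }
  destruct HL as [L HL]. exists L. intros x.
  assert (DH : forall y, is_derive H y (f y)) by (intros; apply is_derive_RInt0; auto).
  assert (Hf' : is_RInt_gen f (Rbar_locally m_infty) (at_point x) (H x - L)).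
  { assert (is_RInt_gen (Derive H) (Rbar_locally m_infty) (at_point x) (H x - L)).
    { apply is_RInt_gen_Derive.
      fpall. intros a b y _; exists (f y); apply DH.
      fpall. intros a b y _. eapply continuous_ext. intros; symmetry; apply is_derive_unique, DH. auto.
      auto. apply filterlim_at_point_self. }
    eapply is_RInt_gen_ext; [| exact H0].
    fpall. intros; simpl. apply is_derive_unique, DH. }
  split. exact Hf'.
  assert (HI : is_RInt_gen dG (Rbar_locally m_infty) (at_point x) (G x - Gm)).
  { eapply is_RInt_gen_ext; [| apply (is_RInt_gen_Derive G)].
    fpall. intros; simpl. apply is_derive_unique, HG.
    fpall. intros a b y _; exists (dG y); apply HG.
    fpall. intros a b y _. eapply continuous_ext. intros; symmetry; apply is_derive_unique, HG. auto.
    auto. apply filterlim_at_point_self. }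
  apply (RInt_gen_norm (Fa := Rbar_locally m_infty) (Fb := at_point x) f dG); [ | | exact Hf' | exact HI].
  + exists (fun a => a < x) (fun b => b = x). exists x; auto. reflexivity.
    intros a b ha hb; simpl; subst; lra.
  + fpall. intros a b y _. apply Hb.
Qed.

Definition iRg (f : R -> R) (l : R) :=
  is_RInt_gen f (Rbar_locally m_infty) (Rbar_locally p_infty) l.

Lemma sech_dom x : sech x <= 4 * exp x / (exp x + 1) ^ 2.
Proof.
  unfold sech, cosh. rewrite exp_Ropp. pose proof (exp_pos x). set (E := exp x) in *.
  replace (/ ((E + / E) / 2)) with (2 * E / (E * E + 1)) by (field; nra).
  apply Rmult_le_reg_r with ((E*E+1) * (E+1)^2). apply Rmult_lt_0_compat; nra.
  field_simplify; try nra.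
  assert (0 <= E * (E-1)^2) by (apply Rmult_le_pos; [lra | apply pow2_ge_0]).
  nra.
Qed.

Lemma dcont (f : R -> R) x : ex_derive f x -> continuous f x.
Proof. intros H. apply (ex_derive_continuous (K:=R_AbsRing) (V:=R_NormedModule)). exact H. Qed.

Lemma ex_line (f : R -> R) M : (forall x, continuous f x) ->
  (forall x, Rabs (f x) <= M * sech x) -> iRg f (int_R f).
Proof.
  intros Hf Hb.
  set (M' := Rabs M).
  set (G := fun x => M' * (-4 / (exp x + 1))).
  set (dG := fun x => M' * (4 * exp x / (exp x + 1) ^ 2)).
  assert (HG : forall x, is_derive G x (dG x)).
  { intros x. unfold G, dG. pose proof (exp_pos x). auto_derive. lra. field. lra. }
  assert (HdG : forall x, continuous dG x).
  { intros x. apply dcont. unfold dG. pose proof (exp_pos x). auto_derive. apply Rgt_not_eq; repeat apply Rmult_lt_0_compat; lra. }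
  assert (Hb' : forall x, Rabs (f x) <= dG x).
  { intros x. eapply Rle_trans. apply Hb. unfold dG.
    pose proof (sech_pos x). pose proof (sech_dom x). pose proof (Rle_abs M) as HM; fold M' in HM.
    assert (0 <= M') by apply Rabs_pos.
    apply Rle_trans with (M' * sech x). apply Rmult_le_compat_r; lra.
    apply Rmult_le_compat_l; lra. }
  destruct (tail_p f dG G 0 Hf HG HdG Hb') as [Lp HLp].
  { apply (lim0_p _ (4 * M')). intros y _. unfold G. pose proof (exp_pos y).
    pose proof (exp_pos (-y)). assert (0 <= M') by apply Rabs_pos.
    rewrite Rabs_mult, (Rabs_right M') by lra.
    rewrite Rabs_left1. 2: { unfold Rdiv. pose proof (Rinv_0_lt_compat (exp y + 1) ltac:(lra)). lra. }
    replace (- (-4 / (exp y + 1))) with (4 / (exp y + 1)) by (field; lra).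
    apply Rle_trans with (M' * (4 * exp (-y))). apply Rmult_le_compat_l. lra.
    rewrite exp_Ropp. unfold Rdiv. apply Rmult_le_compat_l. lra.
    apply Rinv_le_contravar; lra. apply Req_le; ring. }
  destruct (tail_m f dG G (M' * -4) Hf HG HdG Hb') as [Lm HLm].
  { apply (filterlim_ext (fun x => (G x - M' * -4) + M' * -4)). intros; ring.
    replace (locally (M' * -4)) with (locally ((fun y => y + M' * -4) 0)) by (f_equal; simpl; ring).
    apply (filterlim_comp _ _ _ (fun x => G x - M' * -4) (fun y => y + M' * -4) _ (locally 0)).
    apply (lim0_m _ (4 * M')). intros y _. unfold G. pose proof (exp_pos y).
    assert (0 <= M') by apply Rabs_pos.
    replace (M' * (-4 / (exp y + 1)) - M' * -4) with (M' * (4 * exp y / (exp y + 1))) by (field; lra).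
    rewrite Rabs_mult, (Rabs_right M') by lra.
    rewrite Rabs_right. 2: { apply Rle_ge, Rdiv_le_0_compat; lra. }
    assert (4 * exp y / (exp y + 1) <= 4 * exp y).
    { unfold Rdiv. assert (/ (exp y + 1) <= 1) by (rewrite <- Rinv_1; apply Rinv_le_contravar; lra).
      pose proof (Rinv_0_lt_compat (exp y+1) ltac:(lra)). nra. }
    apply Rle_trans with (M' * (4 * exp y)). apply Rmult_le_compat_l; lra. apply Req_le; ring.
    apply (continuous_plus (fun y => y) (fun _ => M' * -4)). apply continuous_id. apply continuous_const. }
  destruct (HLp 0) as [H1 _]. destruct (HLm 0) as [H2 _].
  pose proof (is_RInt_gen_Chasles f 0 _ _ H2 H1) as H3.
  unfold iRg, int_R. rewrite (is_RInt_gen_unique f _ H3). exact H3.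
Qed.

Lemma dmul (f g : R -> R) x df dg : is_derive f x df -> is_derive g x dg ->
  is_derive (fun y => f y * g y) x (df * g x + f x * dg).
Proof. intros H1 H2. apply (is_derive_mult (K:=R_AbsRing) f g x df dg); auto. intros; apply Rmult_comm. Qed.
Lemma dplus (f g : R -> R) x df dg : is_derive f x df -> is_derive g x dg ->
  is_derive (fun y => f y + g y) x (df + dg).
Proof. intros H1 H2. apply (is_derive_plus (K:=R_AbsRing) (V:=R_NormedModule) f g x df dg); auto. Qed.
Lemma dminus (f g : R -> R) x df dg : is_derive f x df -> is_derive g x dg ->
  is_derive (fun y => f y - g y) x (df - dg).
Proof. intros H1 H2. apply (is_derive_minus (K:=R_AbsRing) (V:=R_NormedModule) f g x df dg); auto. Qed.
Lemma deq (f : R -> R) (x l1 l2 : R) : is_derive f x l1 -> @eq R l1 l2 -> is_derive f x l2.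
Proof. intros H E; subst; auto. Qed.
Lemma dexp c x : is_derive (fun y => exp (c * y)) x (c * exp (c * x)).
Proof. auto_derive; auto. ring. Qed.

Lemma sqrt2_facts : 1 < sqrt 2 /\ sqrt 2 * sqrt 2 = 2.
Proof.
  split. rewrite <- sqrt_1. apply sqrt_lt_1; lra. apply sqrt_sqrt; lra.
Qed.

Lemma cont_sech x : continuous sech x.
Proof. apply dcont. unfold sech. pose proof (cosh_pos x). auto_derive. lra. Qed.

Lemma sech2_le1 y : sech y ^ 2 <= 1.
Proof. pose proof (sech_pos y). pose proof (sech_le1 y). simpl. nra. Qed.

Lemma T_props : exists T1 : R -> R,
  (forall x, is_derive T x (T1 x)) /\
  (forall x, is_derive T1 x (2 * T x - 2 * sqrt 2 * sech x ^ 2)) /\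
  (forall x, Rabs (T x) <= 2) /\ (forall x, Rabs (T1 x) <= 2).
Proof.
  destruct sqrt2_facts as [a1 aa]. set (a := sqrt 2) in *.
  set (fA := fun y => exp (a * y) * sech y ^ 2).
  set (fB := fun y => exp ((- a) * y) * sech y ^ 2).
  assert (cA : forall x, continuous fA x).
  { intros x. apply dcont. unfold fA, sech. pose proof (cosh_pos x). auto_derive. lra. }
  assert (cB : forall x, continuous fB x).
  { intros x. apply dcont. unfold fB, sech. pose proof (cosh_pos x). auto_derive. lra. }
  destruct (tail_m fA (fun y => exp (a * y)) (fun y => / a * exp (a * y)) 0 cA) as [Am HA].
  { intros x. eapply deq. apply (is_derive_scal (fun y => exp (a*y))). apply dexp. field. lra. }
  { intros x. apply dcont. auto_derive. auto. }
  { intros x. unfold fA. rewrite Rabs_right. 2: { apply Rle_ge, Rmult_le_pos. pose proof (exp_pos (a*x)); lra. apply pow_le. pose proof (sech_pos x); lra. }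
    pose proof (exp_pos (a*x)). pose proof (sech2_le1 x). nra. }
  { apply (lim0_m _ (/ a)). intros y Hy. pose proof (exp_pos (a*y)).
    pose proof (Rinv_0_lt_compat a ltac:(lra)).
    rewrite Rabs_right. 2: { apply Rle_ge, Rmult_le_pos; lra. }
    apply Rmult_le_compat_l. lra.
    destruct (Rle_lt_or_eq_dec _ _ Hy). left. apply exp_increasing. nra. subst. rewrite Rmult_0_r. lra. }
  destruct (tail_p fB (fun y => exp ((- a) * y)) (fun y => - (/ a * exp ((- a) * y))) 0 cB) as [Bp HB].
  { intros x. eapply deq.
    apply (is_derive_opp (K:=R_AbsRing) (V:=R_NormedModule) (fun y => / a * exp (- a*y))).
    apply (is_derive_scal (fun y => exp (- a*y))). apply dexp.
    change (opp ?z) with (- z). field. lra. }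
  { intros x. apply dcont. auto_derive. auto. }
  { intros x. unfold fB. rewrite Rabs_right. 2: { apply Rle_ge, Rmult_le_pos. pose proof (exp_pos (-a*x)); lra. apply pow_le. pose proof (sech_pos x); lra. }
    pose proof (exp_pos (-a*x)). pose proof (sech2_le1 x). nra. }
  { apply (lim0_p _ (/ a)). intros y Hy. pose proof (exp_pos (-a*y)).
    pose proof (Rinv_0_lt_compat a ltac:(lra)).
    rewrite Rabs_Ropp, Rabs_right. 2: { apply Rle_ge, Rmult_le_pos; lra. }
    apply Rmult_le_compat_l. lra.
    destruct (Rle_lt_or_eq_dec _ _ Hy). left. apply exp_increasing. nra. subst. rewrite Rmult_0_r, Ropp_0. lra. }
  set (A := fun x => RInt fA 0 x). set (B := fun x => RInt fB 0 x).
  set (P := fun x => exp ((- a) * x) * (A x - Am)).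
  set (Q := fun x => exp (a * x) * (Bp - B x)).
  assert (Teq : forall x, T x = P x + Q x).
  { intros x. unfold T, int_R. apply is_RInt_gen_unique.
    apply (is_RInt_gen_Chasles _ x (P x) (Q x)).
    - destruct (HA x) as [H _].
      apply (is_RInt_gen_scal _ (exp ((- a) * x))) in H.
      eapply is_RInt_gen_ext; [| exact H].
      exists (fun u => u < x) (fun v => v = x). exists x; auto. reflexivity.
      intros u v Hu Hv y Hy. simpl in Hy. subst v. rewrite Rmin_left, Rmax_right in Hy by lra.
      change (scal ?p ?q) with (p * q). unfold fA.
      rewrite Rabs_right by lra. rewrite <- Rmult_assoc, <- exp_plus. f_equal. f_equal. unfold a. ring.
    - destruct (HB x) as [H _].
      apply (is_RInt_gen_scal _ (exp (a * x))) in H.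
      eapply is_RInt_gen_ext; [| exact H].
      exists (fun v => v = x) (fun u => x < u). reflexivity. exists x; auto.
      intros v u Hv Hu y Hy. simpl in Hy. subst v. rewrite Rmin_left, Rmax_right in Hy by lra.
      change (scal ?p ?q) with (p * q). unfold fB.
      rewrite Rabs_left by lra. rewrite <- Rmult_assoc, <- exp_plus. f_equal. f_equal. unfold a. ring. }
  assert (dA : forall x, is_derive A x (fA x)) by (intros; apply is_derive_RInt0; auto).
  assert (dB : forall x, is_derive B x (fB x)) by (intros; apply is_derive_RInt0; auto).
  assert (dP : forall x, is_derive P x (- a * P x + sech x ^ 2)).
  { intros x. eapply deq. apply dmul. apply dexp. apply dminus. apply dA.
    apply (is_derive_const (K:=R_AbsRing) (V:=R_NormedModule)).
    unfold P, fA. change (zero : R) with 0. rewrite Rminus_0_r.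
    rewrite <- Rmult_assoc, <- exp_plus. replace (- a * x + a * x) with 0 by ring. rewrite exp_0. ring. }
  assert (dQ : forall x, is_derive Q x (a * Q x - sech x ^ 2)).
  { intros x. eapply deq. apply dmul. apply dexp. apply dminus.
    apply (is_derive_const (K:=R_AbsRing) (V:=R_NormedModule)). apply dB.
    unfold Q, fB. change (zero : R) with 0.
    replace (exp (a * x) * (0 - exp (- a * x) * sech x ^ 2)) with (- (exp (a*x) * exp (- a * x)) * sech x ^ 2) by ring.
    rewrite <- exp_plus. replace (a * x + - a * x) with 0 by ring. rewrite exp_0. ring. }
  assert (bP : forall x, Rabs (P x) <= / a).
  { intros x. destruct (HA x) as [_ H]. unfold P. rewrite Rabs_mult, Rabs_right by (apply Rle_ge, Rlt_le, exp_pos).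
    fold (A x) in H. pose proof (exp_pos (- a * x)).
    apply Rle_trans with (exp (- a * x) * (/ a * exp (a * x) - 0)). apply Rmult_le_compat_l; lra.
    replace (exp (- a * x) * (/ a * exp (a * x) - 0)) with ((exp (- a * x) * exp (a * x)) / a) by (field; lra).
    rewrite <- exp_plus. replace (- a * x + a * x) with 0 by ring. rewrite exp_0. lra. }
  assert (bQ : forall x, Rabs (Q x) <= / a).
  { intros x. destruct (HB x) as [_ H]. unfold Q. rewrite Rabs_mult, Rabs_right by (apply Rle_ge, Rlt_le, exp_pos).
    fold (B x) in H. pose proof (exp_pos (a * x)).
    apply Rle_trans with (exp (a * x) * (0 - - (/ a * exp (- a * x)))). apply Rmult_le_compat_l; lra.
    replace (exp (a * x) * (0 - - (/ a * exp (- a * x)))) with ((exp (a * x) * exp (- a * x)) / a) by (field; lra).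
    rewrite <- exp_plus. replace (a * x + - a * x) with 0 by ring. rewrite exp_0. lra. }
  assert (ia : / a < 1). { rewrite <- Rinv_1. apply Rinv_lt_contravar; lra. }
  exists (fun x => a * (Q x - P x)). split; [|split; [|split]].
  - intros x. eapply is_derive_ext. intros; symmetry; apply Teq.
    eapply deq. apply dplus. apply dP. apply dQ. ring.
  - intros x. eapply deq. apply (is_derive_scal (fun y => Q y - P y)). apply dminus. apply dQ. apply dP.
    rewrite Teq. fold a. replace 2 with (a * a) at 1 by exact aa. ring.
  - intros x. rewrite Teq. eapply Rle_trans. apply Rabs_triang. pose proof (bP x). pose proof (bQ x). lra.
  - intros x. rewrite Rabs_mult, Rabs_right by lra.
    assert (Rabs (Q x - P x) <= 2 / a).
    { unfold Rminus. eapply Rle_trans. apply Rabs_triang. rewrite Rabs_Ropp. pose proof (bP x). pose proof (bQ x). unfold Rdiv. lra. }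
    apply Rle_trans with (a * (2 / a)). apply Rmult_le_compat_l; lra. apply Req_le. field. lra.
Qed.

Lemma iRg_ext f g l : (forall x, f x = g x) -> iRg f l -> iRg g l.
Proof. intros E H. eapply is_RInt_gen_ext; [| exact H]. fpall. intros; apply E. Qed.

Lemma iRg_lin f g c l1 l2 : iRg f l1 -> iRg g l2 -> iRg (fun x => c * f x + g x) (c * l1 + l2).
Proof.
  intros H1 H2. apply (is_RInt_gen_scal _ c) in H1.
  exact (is_RInt_gen_plus _ _ _ _ H1 H2).
Qed.

Lemma iRg_scal f c l : iRg f l -> iRg (fun x => c * f x) (c * l).
Proof. intros H1. exact (is_RInt_gen_scal _ c _ H1). Qed.

Lemma iRg_uniq f l1 l2 : iRg f l1 -> iRg f l2 -> l1 = l2.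
Proof.
  intros H1 H2. rewrite <- (is_RInt_gen_unique _ _ H1). apply is_RInt_gen_unique. exact H2.
Qed.

Lemma cmul (f g : R -> R) x : continuous f x -> continuous g x -> continuous (fun y => f y * g y) x.
Proof. intros. apply (continuous_mult (K:=R_AbsRing) f g); auto. Qed.
Lemma cplus (f g : R -> R) x : continuous f x -> continuous g x -> continuous (fun y => f y + g y) x.
Proof. intros. apply (continuous_plus (V:=R_NormedModule) f g); auto. Qed.
Lemma cminus (f g : R -> R) x : continuous f x -> continuous g x -> continuous (fun y => f y - g y) x.
Proof. intros. apply (continuous_minus (V:=R_NormedModule) f g); auto. Qed.
Lemma cconst (c : R) x : continuous (fun _ : R => c) x.
Proof. apply continuous_const. Qed.

Lemma cont_tanh x : continuous tanh x.
Proof. apply dcont. unfold tanh. pose proof (cosh_pos x). auto_derive. lra. Qed.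
Lemma cont_sin x : continuous sin x.
Proof. apply dcont. auto_derive. auto. Qed.
Lemma cont_cos x : continuous cos x.
Proof. apply dcont. auto_derive. auto. Qed.
Lemma cont_sechp n x : continuous (fun y => sech y ^ n) x.
Proof. apply dcont. unfold sech. pose proof (cosh_pos x). auto_derive. lra. Qed.

Lemma is_derive_tanh x : is_derive tanh x (sech x ^ 2).
Proof.
  unfold tanh, sech. pose proof (cosh_pos x). auto_derive. lra.
  unfold sinh, cosh in *. rewrite exp_Ropp in *. pose proof (exp_pos x). set (E := exp x) in *.
  field. split; nra.
Qed.

Lemma is_derive_sechp n x :
  is_derive (fun y => sech y ^ (S n)) x (- INR (S n) * sech x ^ (S n) * tanh x).
Proof.
  eapply deq. apply is_derive_pow. apply is_derive_sech.
  simpl pred. simpl pow. ring.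
Qed.

Lemma pow_le_one (y : R) n : 0 <= y <= 1 -> y ^ n <= 1.
Proof.
  intros H. induction n. simpl; lra. simpl.
  assert (0 <= y ^ n) by (apply pow_le; lra). nra.
Qed.

Lemma sechp_le n x : sech x ^ (S n) <= sech x.
Proof.
  simpl. pose proof (sech_pos x). pose proof (sech_le1 x).
  assert (0 <= sech x ^ n <= 1).
  { split. apply pow_le; lra. apply pow_le_one; lra. }
  nra.
Qed.

Lemma sechp_pos n x : 0 <= sech x ^ n.
Proof. apply pow_le. pose proof (sech_pos x). lra. Qed.

Lemma bound_sechp n (g : R -> R) M x : (forall x, Rabs (g x) <= M) ->
  Rabs (sech x ^ (S n) * g x) <= M * sech x.
Proof.
  intros Hg. rewrite Rabs_mult, Rabs_right by (apply Rle_ge, sechp_pos).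
  pose proof (sechp_le n x). pose proof (sechp_pos (S n) x). pose proof (Hg x).
  pose proof (Rabs_pos (g x)). pose proof (sech_pos x). nra.
Qed.

Lemma IBP n (h dh : R -> R) M : (forall x, is_derive h x (dh x)) ->
  (forall x, continuous dh x) -> (forall x, Rabs (h x) <= M) ->
  iRg (fun x => sech x ^ (S n) * dh x - INR (S n) * sech x ^ (S n) * tanh x * h x) 0.
Proof.
  intros Hd Hc Hb.
  set (F := fun x => sech x ^ (S n) * h x).
  set (G := fun x => sech x ^ (S n) * dh x - INR (S n) * sech x ^ (S n) * tanh x * h x).
  assert (dF : forall x, is_derive F x (G x)).
  { intros x. eapply deq. apply dmul. apply is_derive_sechp. apply Hd. unfold G. ring. }
  assert (cG : forall x, continuous G x).
  { intros x. unfold G. apply cminus. apply cmul. apply cont_sechp. auto.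
    apply cmul. apply cmul. apply cmul. apply cconst. apply cont_sechp. apply cont_tanh.
    apply dcont. eexists; apply Hd. }
  assert (bF : forall x, Rabs (F x) <= 2 * M * exp (- Rabs x)).
  { intros x. unfold F. eapply Rle_trans. apply bound_sechp. exact Hb.
    pose proof (sech_exp x). assert (0 <= M) by (pose proof (Hb 0); pose proof (Rabs_pos (h 0)); lra).
    nra. }
  assert (H : iRg (Derive F) (0 - 0)).
  { apply is_RInt_gen_Derive.
    fpall. intros a b y _; exists (G y); apply dF.
    fpall. intros a b y _. eapply continuous_ext. intros; symmetry; apply is_derive_unique, dF. auto.
    apply (lim0_m _ (2 * M)). intros y Hy. specialize (bF y). rewrite (Rabs_left1 y) in bF by lra.
      rewrite Ropp_involutive in bF. auto.
    apply (lim0_p _ (2 * M)). intros y Hy. specialize (bF y). rewrite (Rabs_right y) in bF by lra. auto. }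
  rewrite Rminus_0_r in H. eapply iRg_ext; [| exact H].
  intros x. apply is_derive_unique, dF.
Qed.

Lemma IBP2 n (h dh : R -> R) M : (forall x, is_derive h x (dh x)) ->
  (forall x, continuous dh x) -> (forall x, continuous h x) -> (forall x, Rabs (h x) <= M) ->
  iRg (fun x => (1 + INR (S n)) * sech x ^ (S n) * sech x ^ 2 * h x
                 - INR (S n) * sech x ^ (S n) * h x + sech x ^ (S n) * tanh x * dh x) 0.
Proof.
  intros Hd Hc Hch Hb.
  pose proof (IBP n (fun x => tanh x * h x) (fun x => sech x ^ 2 * h x + tanh x * dh x) M) as H.
  eapply iRg_ext; [| apply H].
  - intros x. assert (E : tanh x * tanh x = 1 - sech x ^ 2) by (rewrite <- tanh_sq; ring).
    transitivity (sech x ^ S n * (sech x ^ 2 * h x + tanh x * dh x) -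
       INR (S n) * sech x ^ S n * (tanh x * tanh x) * h x). ring.
    rewrite E. ring.
  - intros x. eapply deq. apply dmul. apply is_derive_tanh. apply Hd. ring.
  - intros x. apply cplus; apply cmul; auto. apply cont_sechp. apply cont_tanh.
  - intros x. rewrite Rabs_mult. pose proof (tanh_abs x). pose proof (Hb x).
    pose proof (Rabs_pos (tanh x)). pose proof (Rabs_pos (h x)). nra.
Qed.

Definition Tgood (T1 : R -> R) :=
  (forall x, is_derive T x (T1 x)) /\
  (forall x, is_derive T1 x (2 * T x - 2 * sqrt 2 * sech x ^ 2)) /\
  (forall x, Rabs (T x) <= 2) /\ (forall x, Rabs (T1 x) <= 2).

Definition fR k := fun x => sech x ^ k * T x * cos x.
Definition fS k := fun x => sech x ^ k * T x * tanh x * sin x.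
Definition fP k := fun x => sech x ^ k * cos x.
Definition fQ k := fun x => sech x ^ k * tanh x * sin x.
Definition fU (T1 : R -> R) k := fun x => sech x ^ k * T1 x * sin x.
Definition fV (T1 : R -> R) k := fun x => sech x ^ k * tanh x * T1 x * cos x.

Lemma ex_form n f g M : (forall x, f x = sech x ^ (S n) * g x) -> (forall x, continuous g x) ->
  (forall x, Rabs (g x) <= M) -> iRg f (int_R f).
Proof.
  intros E Hc Hb. apply (ex_line f M).
  intros x; eapply continuous_ext. intros; symmetry; apply E. apply cmul. apply cont_sechp. auto.
  intros x; rewrite E; apply bound_sechp; auto.
Qed.

Lemma babs u v A : Rabs u <= A -> Rabs v <= 1 -> Rabs (u * v) <= A.
Proof.
  intros H1 H2. rewrite Rabs_mult. pose proof (Rabs_pos u). pose proof (Rabs_pos v). nra.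
Qed.
Lemma sin_b x : Rabs (sin x) <= 1.
Proof. apply Rabs_le. apply SIN_bound. Qed.
Lemma cos_b x : Rabs (cos x) <= 1.
Proof. apply Rabs_le. apply COS_bound. Qed.

Lemma cT T1 : Tgood T1 -> forall x, continuous T x.
Proof. intros [H _] x. apply dcont. eexists; apply H. Qed.
Lemma cT1 T1 : Tgood T1 -> forall x, continuous T1 x.
Proof. intros [_ [H _]] x. apply dcont. eexists; apply H. Qed.


Lemma eR T1 (HT : Tgood T1) n : iRg (fR (S n)) (r_ (S n)).
Proof.
  apply (ex_form n _ (fun x => T x * cos x) 2). intros; unfold fR; ring.
  intros; apply cmul. apply (cT T1 HT). apply cont_cos.
  intros; apply babs. apply HT. apply cos_b.
Qed.
Lemma eS T1 (HT : Tgood T1) n : iRg (fS (S n)) (s_ (S n)).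
Proof.
  apply (ex_form n _ (fun x => T x * tanh x * sin x) 2). intros; unfold fS; ring.
  intros; apply cmul. apply cmul. apply (cT T1 HT). apply cont_tanh. apply cont_sin.
  intros; apply babs. apply babs. apply HT. apply tanh_abs. apply sin_b.
Qed.
Lemma eP n : iRg (fP (S n)) (p_ (S n)).
Proof.
  apply (ex_form n _ (fun x => cos x) 1). intros; unfold fP; ring.
  intros; apply cont_cos. intros; apply cos_b.
Qed.
Lemma eQ n : iRg (fQ (S n)) (int_R (fQ (S n))).
Proof.
  apply (ex_form n _ (fun x => tanh x * sin x) 1). intros; unfold fQ; ring.
  intros; apply cmul. apply cont_tanh. apply cont_sin.
  intros; apply babs. apply tanh_abs. apply sin_b.
Qed.
Lemma eU T1 (HT : Tgood T1) n : iRg (fU T1 (S n)) (int_R (fU T1 (S n))).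
Proof.
  apply (ex_form n _ (fun x => T1 x * sin x) 2). intros; unfold fU; ring.
  intros; apply cmul. apply (cT1 T1 HT). apply cont_sin.
  intros; apply babs. apply HT. apply sin_b.
Qed.
Lemma eV T1 (HT : Tgood T1) n : iRg (fV T1 (S n)) (int_R (fV T1 (S n))).
Proof.
  apply (ex_form n _ (fun x => tanh x * T1 x * cos x) 2). intros; unfold fV; ring.
  intros; apply cmul. apply cmul. apply cont_tanh. apply (cT1 T1 HT). apply cont_cos.
  intros; apply babs. rewrite Rmult_comm. apply babs. apply HT. apply tanh_abs. apply cos_b.
Qed.

Lemma pow3 x n : sech x ^ S (S (S n)) = sech x ^ (S n) * sech x ^ 2.
Proof. change (S (S (S n))) with (2 + S n)%nat. rewrite pow_add. ring. Qed.

Lemma E1 T1 (HT : Tgood T1) n :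
  0 = 1 * int_R (fU T1 (S n)) + (1 * r_ (S n) + (- INR (S n)) * s_ (S n)).
Proof.
  pose proof HT as [d0 [d1 [b0 b1]]].
  pose proof (IBP n (fun x => T x * sin x) (fun x => T1 x * sin x + T x * cos x) 2) as H.
  eapply iRg_uniq; [| apply (iRg_lin _ _ 1 _ _ (eU T1 HT n) (iRg_lin _ _ 1 _ _ (eR T1 HT n) (iRg_scal _ (- INR (S n)) _ (eS T1 HT n))))].
  eapply iRg_ext; [| apply H].
  - intros x; unfold fU, fR, fS; ring.
  - intros x. eapply deq. apply dmul. apply d0. apply is_derive_sin. ring.
  - intros x. apply cplus; apply cmul. apply (cT1 T1 HT). apply cont_sin. apply (cT T1 HT). apply cont_cos.
  - intros x. apply babs. apply b0. apply sin_b.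
Qed.

Lemma cTc T1 (HT : Tgood T1) x : continuous (fun y => 2 * T y - 2 * sqrt 2 * sech y ^ 2) x.
Proof.
  apply cminus; apply cmul. apply cconst. apply (cT T1 HT). apply cconst. apply cont_sechp.
Qed.

Lemma E2 T1 (HT : Tgood T1) n :
  0 = (1 + INR (S n)) * r_ (S (S (S n))) + ((- INR (S n)) * r_ (S n)
       + (1 * int_R (fV T1 (S n)) + (-1) * s_ (S n))).
Proof.
  pose proof HT as [d0 [d1 [b0 b1]]].
  pose proof (IBP2 n (fun x => T x * cos x) (fun x => T1 x * cos x - T x * sin x) 2) as H.
  eapply iRg_uniq; [| apply (iRg_lin _ _ _ _ _ (eR T1 HT (S (S n)))
     (iRg_lin _ _ _ _ _ (eR T1 HT n) (iRg_lin _ _ 1 _ _ (eV T1 HT n) (iRg_scal _ (-1) _ (eS T1 HT n)))))].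
  eapply iRg_ext; [| apply H].
  - intros x; unfold fU, fR, fS, fV. rewrite pow3. ring.
  - intros x. eapply deq. apply dmul. apply d0. apply is_derive_cos. ring.
  - intros x. apply cminus; apply cmul. apply (cT1 T1 HT). apply cont_cos. apply (cT T1 HT). apply cont_sin.
  - intros x. apply cmul. apply (cT T1 HT). apply cont_cos.
  - intros x. apply babs. apply b0. apply cos_b.
Qed.

Lemma EW T1 (HT : Tgood T1) n :
  0 = 2 * r_ (S n) + ((- 2 * sqrt 2) * p_ (S (S (S n)))
       + ((-1) * int_R (fU T1 (S n)) + (- INR (S n)) * int_R (fV T1 (S n)))).
Proof.
  pose proof HT as [d0 [d1 [b0 b1]]].
  pose proof (IBP n (fun x => T1 x * cos x)
     (fun x => (2 * T x - 2 * sqrt 2 * sech x ^ 2) * cos x - T1 x * sin x) 2) as H.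
  eapply iRg_uniq; [| apply (iRg_lin _ _ _ _ _ (eR T1 HT n)
     (iRg_lin _ _ _ _ _ (eP (S (S n))) (iRg_lin _ _ _ _ _ (eU T1 HT n) (iRg_scal _ (- INR (S n)) _ (eV T1 HT n)))))].
  eapply iRg_ext; [| apply H].
  - intros x; unfold fU, fR, fP, fV. rewrite pow3. ring.
  - intros x. eapply deq. apply dmul. apply d1. apply is_derive_cos. ring.
  - intros x. apply cminus; apply cmul. apply (cTc T1 HT). apply cont_cos. apply (cT1 T1 HT). apply cont_sin.
  - intros x. apply babs. apply b1. apply cos_b.
Qed.

Lemma EX T1 (HT : Tgood T1) n :
  0 = (1 + INR (S n)) * int_R (fU T1 (S (S (S n)))) + ((- INR (S n)) * int_R (fU T1 (S n))
       + (2 * s_ (S n) + ((- 2 * sqrt 2) * int_R (fQ (S (S (S n)))) + 1 * int_R (fV T1 (S n))))).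
Proof.
  pose proof HT as [d0 [d1 [b0 b1]]].
  pose proof (IBP2 n (fun x => T1 x * sin x)
     (fun x => (2 * T x - 2 * sqrt 2 * sech x ^ 2) * sin x + T1 x * cos x) 2) as H.
  eapply iRg_uniq; [| apply (iRg_lin _ _ _ _ _ (eU T1 HT (S (S n)))
     (iRg_lin _ _ _ _ _ (eU T1 HT n) (iRg_lin _ _ _ _ _ (eS T1 HT n)
       (iRg_lin _ _ _ _ _ (eQ (S (S n))) (iRg_scal _ 1 _ (eV T1 HT n))))))].
  eapply iRg_ext; [| apply H].
  - intros x; unfold fU, fR, fQ, fS, fV. rewrite !pow3. ring.
  - intros x. eapply deq. apply dmul. apply d1. apply is_derive_sin. ring.
  - intros x. apply cplus; apply cmul. apply (cTc T1 HT). apply cont_sin. apply (cT1 T1 HT). apply cont_cos.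
  - intros x. apply cmul. apply (cT1 T1 HT). apply cont_sin.
  - intros x. apply babs. apply b1. apply sin_b.
Qed.

Lemma EP1 n : 0 = 1 * p_ (S n) + (- INR (S n)) * int_R (fQ (S n)).
Proof.
  pose proof (IBP n sin cos 1) as H.
  eapply iRg_uniq; [| apply (iRg_lin _ _ _ _ _ (eP n) (iRg_scal _ (- INR (S n)) _ (eQ n)))].
  eapply iRg_ext; [| apply H].
  - intros x; unfold fP, fQ. ring.
  - intros x. apply is_derive_sin.
  - apply cont_cos.
  - apply sin_b.
Qed.

Lemma EP2 n : 0 = (1 + INR (S n)) * p_ (S (S (S n))) + ((- INR (S n)) * p_ (S n)
      + (-1) * int_R (fQ (S n))).
Proof.
  pose proof (IBP2 n cos (fun x => - sin x) 1) as H.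
  eapply iRg_uniq; [| apply (iRg_lin _ _ _ _ _ (eP (S (S n))) (iRg_lin _ _ _ _ _ (eP n) (iRg_scal _ (-1) _ (eQ n))))].
  eapply iRg_ext; [| apply H].
  - intros x; unfold fP, fQ. rewrite pow3. ring.
  - intros x. apply is_derive_cos.
  - intros x. apply dcont. auto_derive. auto.
  - apply cont_cos.
  - apply cos_b.
Qed.

Theorem lemma3p3 :
  r_ 3 = - r_ 1 + s_ 1 + sqrt 2 * p_ 1 /\
  s_ 3 = (1/3) * s_ 1 - r_ 1 + (7/9) * sqrt 2 * p_ 1 /\
  r_ 5 = - r_ 1 + (2/3) * s_ 1 + (37/36) * sqrt 2 * p_ 1 /\
  s_ 5 = - (2/5) * r_ 1 + (1/15) * s_ 1 + (13/36) * sqrt 2 * p_ 1 /\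
  r_ 7 = - (13/15) * r_ 1 + (23/45) * s_ 1 + (83 * sqrt 2 / 90) * p_ 1.
Proof.
  destruct T_props as [T1 HT]. fold (Tgood T1) in HT.
  pose proof (E1 T1 HT 0) as a1. pose proof (E1 T1 HT 2) as a3. pose proof (E1 T1 HT 4) as a5.
  pose proof (E2 T1 HT 0) as b1. pose proof (E2 T1 HT 2) as b3. pose proof (E2 T1 HT 4) as b5.
  pose proof (EW T1 HT 0) as c1. pose proof (EW T1 HT 2) as c3. pose proof (EW T1 HT 4) as c5.
  pose proof (EX T1 HT 0) as d1. pose proof (EX T1 HT 2) as d3.
  pose proof (EP1 0) as e1. pose proof (EP1 2) as e3. pose proof (EP1 4) as e5.
  pose proof (EP2 0) as f1. pose proof (EP2 2) as f3. pose proof (EP2 4) as f5.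
  simpl INR in *.
  set (U1 := int_R (fU T1 1)) in *. set (U3 := int_R (fU T1 3)) in *. set (U5 := int_R (fU T1 5)) in *.
  set (V1 := int_R (fV T1 1)) in *. set (V3 := int_R (fV T1 3)) in *. set (V5 := int_R (fV T1 5)) in *.
  set (Q1 := int_R (fQ 1)) in *. set (Q3 := int_R (fQ 3)) in *. set (Q5 := int_R (fQ 5)) in *.
  assert (hP3 : p_ 3 = p_ 1) by lra.
  assert (hQ3 : Q3 = p_ 1 / 3) by lra.
  assert (hP5 : p_ 5 = 5/6 * p_ 1) by lra.
  assert (hQ5 : Q5 = p_ 1 / 6) by lra.
  assert (hP7 : p_ 7 = 13/18 * p_ 1) by lra.
  rewrite hP3, hP5, hP7 in *. rewrite hQ3, hQ5 in *.
  split; [|split; [|split; [|split]]]; lra.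
Qed.
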